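(* Let $(X,\mathcal{A})$ be a measurable space, $f,g\in\mathcal{F}_{[0,1]}^{(X,\mathcal{A})}$ comonotone, $\star:[0,1]^2\to[0,1]$ continuous and non-decreasing in both arguments, $S$ a t-semiconorm, and $\alpha,\beta,\gamma,\lambda,\upsilon,\tau\in(0,\infty)$ with $\gamma\tau\le1$ and $\beta\upsilon\le1$. If for all $a,b,c\in[0,1]$ \[ \big(S((a\star b)^{\alpha},c)\big)^{\lambda}\ \le\ \big[\big(S(a^{\beta},c)\big)^{\upsilon}\star b\big]\wedge\big[a\star\big(S(b^{\gamma},c)\big)^{\tau}\big], \] then for every monotone measure $m$ on $(X,\mathcal{A})$ with $m(X)=1$, \[ \big[\mathbf{I}_S(m,(f\star g)^{\alpha})\big]^{\lambda}\ \le\ \big[\mathbf{I}_S(m,f^{\beta})\big]^{\upsilon}\star\big[\mathbf{I}_S(m,g^{\gamma})\big]^{\tau}. \]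
   Context: A monotone measure on $(X,\mathcal{A})$ is $m:\mathcal{A}\to[0,\infty]$ with $m(\emptyset)=0$, $m(X)>0$, $m(A)\le m(B)$ for $A\subseteq B$. $\mathcal{F}_{[0,1]}^{(X,\mathcal{A})}$ is the set of $\mathcal{A}$-measurable $f:X\to[0,1]$. A t-semiconorm is a map $S:[0,1]^2\to[0,1]$, non-decreasing in both components, with neutral element $0$ (hence $S(a,b)\ge\max(a,b)$). The semiconormed integral is $\mathbf{I}_S(m,f)=\inf\{S(t,m(\{f>t\})) : t\in(0,1]\}$. $f,g$ are comonotone if $(f(x)-f(y))(g(x)-g(y))\ge0$ for all $x,y$. Operations on functions are pointwise. *)

(* Defs.v *)
From HB Require Import structures.
From mathcomp Require Import all_boot all_order all_algebra.
From mathcomp Require Import all_classical all_reals all_analysis.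
Set Implicit Arguments. Unset Strict Implicit. Unset Printing Implicit Defensive.
Import Order.TTheory GRing.Theory Num.Theory numFieldNormedType.Exports.
Local Open Scope classical_set_scope.
Local Open Scope ring_scope.

Definition unit01 (R : realType) (a : R) : Prop := 0 <= a <= 1.

Definition monotone_measure d (T : measurableType d) (R : realType)
  (m : set T -> \bar R) : Prop :=
  [/\ m set0 = 0%E, (0 < m setT)%E &
      forall A B, measurable A -> measurable B -> A `<=` B -> (m A <= m B)%E].

Definition F01 d (T : measurableType d) (R : realType) (f : T -> R) : Prop :=
  measurable_fun setT f /\ forall x, unit01 (f x).

Definition comonotone (T : Type) (R : realType) (f g : T -> R) : Prop :=
  forall x y, 0 <= (f x - f y) * (g x - g y).

Definition t_semiconorm (R : realType) (S : R -> R -> R) : Prop :=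
  [/\ forall a b, unit01 a -> unit01 b -> unit01 (S a b),
      forall a a' b, unit01 a -> unit01 a' -> unit01 b -> a <= a' -> S a b <= S a' b,
      forall a b b', unit01 a -> unit01 b -> unit01 b' -> b <= b' -> S a b <= S a b'
    & forall a, unit01 a -> S a 0 = a /\ S 0 a = a].

Definition cont_nondecr_op (R : realType) (op : R -> R -> R) : Prop :=
  [/\ forall a b, unit01 a -> unit01 b -> unit01 (op a b),
      {within [set p : R * R | unit01 p.1 /\ unit01 p.2],
         continuous (fun p : R * R => op p.1 p.2)},
      forall a a' b, unit01 a -> unit01 a' -> unit01 b -> a <= a' -> op a b <= op a' b
    & forall a b b', unit01 a -> unit01 b -> unit01 b' -> b <= b' -> op a b <= op a b'].

(* semiconormed integral I_S(m,f) = inf { S(t, m{f>t}) : t in (0,1] }.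
   m(X)=1 in the theorem, so m takes finite values in [0,1]; we use fine. *)
Definition semiconormed_integral d (T : measurableType d) (R : realType)
  (S : R -> R -> R) (m : set T -> \bar R) (f : T -> R) : R :=
  inf [set S t (fine (m [set x | t < f x])) | t in `]0, 1]].

(* Main.v *)
Require Import Defs.
From HB Require Import structures.
From mathcomp Require Import all_boot all_order all_algebra.
From mathcomp Require Import all_classical all_reals all_analysis.
From mathcomp Require Import lra.
From mathcomp Require Import measurable_realfun.
Import Order.TTheory GRing.Theory Num.Theory numFieldNormedType.Exports.
Local Open Scope classical_set_scope.
Local Open Scope ring_scope.

Lemma star_cont {R : realType} (star : R -> R -> R) : cont_nondecr_op star ->
  forall p0 q0, unit01 p0 -> unit01 q0 -> forall e, 0 < e ->
  exists2 dd, 0 < dd & forall p q, unit01 p -> unit01 q ->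
    `|p0 - p| < dd -> `|q0 - q| < dd -> `|star p0 q0 - star p q| < e.
Proof.
case=> _ hc _ _ p0 q0 hp hq e e0.
have := (@subspace_continuousP _ [set p : R * R | unit01 p.1 /\ unit01 p.2] _ (fun p : R * R => star p.1 p.2)).1 hc (p0,q0) (conj hp hq).
move=> /cvgrPdist_lt /(_ e e0).
rewrite near_withinE => /nbhs_ballP [dd /= dd0 hb].
exists dd => // p q up uq dp dq.
have := hb (p, q).
apply => //.
Qed.

Definition clp {R : realType} (r : R) : R := if 0 <= r then r else 0.

Lemma clamp_aux {R : realType} (y r dd : R) : unit01 y -> y - dd < r -> r < y ->
  [/\ unit01 (clp r), clp r <= y & `|y - clp r| < dd].
Proof.
move=> /andP[y0 y1] h1 h2; rewrite /clp.
have [r0|r0] := leP 0 r.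
  split.
  - by rewrite /unit01 r0 /= (le_trans (ltW h2)).
  - exact: ltW.
  - by rewrite ger0_norm ?subr_ge0 ?(ltW h2) //; lra.
split.
- by rewrite /unit01 lexx ler01.
- exact: y0.
- by rewrite subr0 ger0_norm //; lra.
Qed.

Lemma clp_le {R : realType} (y r : R) : 0 <= y -> r < y -> clp r <= y.
Proof. by rewrite /clp => y0 ry; case: ifP => // _; apply: ltW. Qed.

Lemma meas_star d (T : measurableType d) (R : realType) (f g : T -> R)
  (star : R -> R -> R) : F01 f -> F01 g -> cont_nondecr_op star ->
  measurable_fun setT (fun x => star (f x) (g x)).
Proof.
move=> [mf f01] [mg g01] hs; have [s01 _ smon1 smon2] := hs.
apply: (measurability _ (RGenOInfty.measurableE R)) => //.
move=> /= _ [_ [a ->] <-]; rewrite preimage_itvoy setTI.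
rewrite [X in measurable X](_ : _ = \bigcup_(q1 : rat) \bigcup_(q2 : rat)
  (if (ratr q1 <= 1 :> R) && (ratr q2 <= 1 :> R) &&
       (a < star (clp (ratr q1)) (clp (ratr q2)))
   then [set x | ratr q1 < f x] `&` [set x | ratr q2 < g x] else set0)).
  apply: bigcupT_measurable_rat => q1; apply: bigcupT_measurable_rat => q2.
  case: ifP => _ //; apply: measurableI.
  - by have := mf measurableT _ (measurable_itv `]ratr q1, +oo[); rewrite setTI preimage_itvoy.
  - by have := mg measurableT _ (measurable_itv `]ratr q2, +oo[); rewrite setTI preimage_itvoy.
rewrite predeqE => x; split.
- move=> /= hx.
  have e0 : 0 < star (f x) (g x) - a by rewrite subr_gt0.
  have [dd dd0 hd] := star_cont _ hs _ _ (f01 x) (g01 x) _ e0.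
  have [q1] : exists q : rat, (ratr q : R) \in `](f x - dd), f x[ by apply: rat_in_itvoo; rewrite ltrBlDr ltrDl.
  rewrite in_itv /= => /andP[q1a q1b].
  have [q2] : exists q : rat, (ratr q : R) \in `](g x - dd), g x[ by apply: rat_in_itvoo; rewrite ltrBlDr ltrDl.
  rewrite in_itv /= => /andP[q2a q2b].
  have [c1 _ n1] := clamp_aux _ _ _ (f01 x) q1a q1b.
  have [c2 _ n2] := clamp_aux _ _ _ (g01 x) q2a q2b.
  have := hd _ _ c1 c2 n1 n2.
  move/(le_lt_trans (ler_norm _))=> h.
  exists q1 => //; exists q2 => //.
  have -> : (ratr q1 <= 1 :> R) by apply: ltW; apply: lt_le_trans q1b _; case/andP: (f01 x).
  have -> : (ratr q2 <= 1 :> R) by apply: ltW; apply: lt_le_trans q2b _; case/andP: (g01 x).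
  rewrite /=; have -> : a < star (clp (ratr q1)) (clp (ratr q2)).
    by move: h; lra.
  by split.
- move=> [q1 _ [q2 _]]; case: ifP => // /andP[/andP[h1 h2] h3] [/= hf hg].
  have u1 : unit01 (clp (ratr q1 : R)) by rewrite /clp /unit01; case: ifP => [->|_]; rewrite ?lexx ?ler01.
  have u2 : unit01 (clp (ratr q2 : R)) by rewrite /clp /unit01; case: ifP => [->|_]; rewrite ?lexx ?ler01.
  apply: (lt_le_trans h3); apply: (le_trans (smon1 _ _ _ u1 (f01 x) u2 _)).
    by apply: clp_le => //; case/andP: (f01 x).
  apply: smon2 (f01 x) u2 (g01 x) _.
  by apply: clp_le => //; case/andP: (g01 x).
Qed.

Section Aux.
Variables (d : measure_display) (T : measurableType d) (R : realType).

Lemma mfine01 {m : set T -> \bar R} {A : set T} :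
  monotone_measure m -> m setT = 1%E -> measurable A ->
  unit01 (fine (m A)) /\ m A = (fine (m A))%:E.
Proof.
case=> m0 _ mono m1 mA.
have h0 : (0 <= m A)%E by rewrite -m0; apply: mono.
have h1 : (m A <= 1)%E by rewrite -m1; apply: mono.
have fA : m A \is a fin_num by rewrite ge0_fin_numE// (le_lt_trans h1)// ltry.
split; last by rewrite fineK.
apply/andP; split.
  by rewrite -lee_fin fineK.
by rewrite -lee_fin fineK.
Qed.

Lemma mfine_le {m : set T -> \bar R} {A B : set T} :
  monotone_measure m -> m setT = 1%E -> measurable A -> measurable B ->
  A `<=` B -> fine (m A) <= fine (m B).
Proof.
move=> mm m1 mA mB AB.
have [_ eA] := mfine01 mm m1 mA; have [_ eB] := mfine01 mm m1 mB.
rewrite -lee_fin -eA -eB; by case: mm => _ _ mono; apply: mono.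
Qed.

Lemma I_props (S : R -> R -> R) (m : set T -> \bar R) (h : T -> R) :
  t_semiconorm S -> monotone_measure m -> m setT = 1%E ->
  (forall u, measurable [set x | u < h x]) ->
  [/\ unit01 (semiconormed_integral S m h),
      (forall t, 0 < t <= 1 -> semiconormed_integral S m h
                                 <= S t (fine (m [set x | t < h x])))
    & forall e, 0 < e -> exists2 t, 0 < t <= 1 &
        S t (fine (m [set x | t < h x])) < semiconormed_integral S m h + e].
Proof.
move=> [S01 _ _ _] mm m1 mh.
set E := [set S t (fine (m [set x | t < h x])) | t in `]0, 1]].
have Eb : forall y, E y -> unit01 y.
  move=> _ [t /= t01 <-]; apply: S01; last by case: (mfine01 mm m1 (mh t)).
  by move: t01; rewrite /unit01 in_itv /= => /andP[/ltW -> ->].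
have En : nonempty E by exists (S 1 (fine (m [set x | 1 < h x]))), 1 => //=; rewrite in_itv /= ltr01 lexx.
have hlb : has_lbound E by exists 0 => y /Eb /andP[].
have hinf : has_inf E by split.
rewrite /semiconormed_integral -/E; split.
- apply/andP; split; first by apply: lb_le_inf => // y /Eb /andP[].
  case: En => y Ey; apply: le_trans (ge_inf hlb Ey) _.
  by case/andP: (Eb _ Ey).
- move=> t t01; apply: ge_inf => //; exists t => //=.
- move=> e e0; have [y [t t01 <-] ht] := inf_adherent e0 hinf.
  exists t => //; by move: t01; rewrite in_itv.
Qed.

End Aux.
Arguments mfine01 {d T R m A}.
Arguments mfine_le {d T R m A B}.
Arguments I_props {d T R S m h}.
Arguments meas_star {d T R f g star}.

Section Pw.
Variable R : realType.

Lemma pw01 {x r : R} : unit01 x -> 0 <= r -> unit01 (x `^ r).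
Proof.
move=> /andP[x0 x1] r0; rewrite /unit01 powR_ge0 /=.
have := ge0_ler_powR r0 (x := x) (y := 1); rewrite powR1; apply => //.
by rewrite nnegrE.
Qed.

Lemma pw_mono {x y r : R} : 0 <= r -> 0 <= x -> x <= y -> x `^ r <= y `^ r.
Proof.
move=> r0 x0 xy; apply: (ge0_ler_powR r0) => //; rewrite nnegrE //.
exact: le_trans xy.
Qed.

Lemma pw_invK {x r : R} : 0 < r -> 0 <= x -> (x `^ r^-1) `^ r = x.
Proof. by move=> r0 x0; rewrite -powRrM mulVf ?gt_eqF // powRr1. Qed.

Lemma pw_Kinv {x r : R} : 0 < r -> 0 <= x -> (x `^ r) `^ r^-1 = x.
Proof. by move=> r0 x0; rewrite -powRrM mulfV ?gt_eqF // powRr1. Qed.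

Lemma pw_lt {x y r : R} : 0 < r -> 0 <= x -> x < y -> x `^ r < y `^ r.
Proof.
move=> r0 x0 xy; apply: (gt0_ltr_powR r0) => //; rewrite nnegrE //.
exact: ltW (le_lt_trans x0 xy).
Qed.

Lemma approx_pow (r A dd : R) (F : R -> R) (P : R -> Prop) :
  0 < r -> 0 <= A -> 0 < dd -> (forall t, P t -> A <= F t) ->
  (forall e, 0 < e -> exists2 t, P t & F t < A + e) ->
  exists2 t, P t & `|A `^ r - F t `^ r| < dd.
Proof.
move=> r0 A0 dd0 lb ad.
set w := (A `^ r + dd) `^ r^-1.
have rV0 : 0 < r^-1 by rewrite invr_gt0.
have Aw : A < w.
  rewrite -[X in X < _](pw_Kinv r0 A0); apply: pw_lt => //; first exact: powR_ge0.
  by rewrite ltrDl.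
have wA0 : 0 < w - A by rewrite subr_gt0.
have [t Pt Ft] := ad (w - A) wA0.
exists t => //.
have AF := lb t Pt.
have h1 : A `^ r <= F t `^ r by apply: pw_mono => //; exact: ltW.
have h2 : F t `^ r < A `^ r + dd.
  have -> : A `^ r + dd = w `^ r.
    by rewrite /w pw_invK // addr_ge0 ?powR_ge0 // ltW.
  apply: pw_lt => //; first exact: le_trans AF.
  by move: Ft; rewrite addrC subrK.
rewrite ler0_norm ?subr_le0 //; lra.
Qed.

Lemma exp_anti {x p q : R} : 0 < x <= 1 -> p <= q -> x `^ q <= x `^ p.
Proof. by move=> hx pq; apply: ger_powR. Qed.

End Pw.
Arguments pw01 {R x r}.
Arguments pw_mono {R x y r}.
Arguments pw_invK {R x r}.
Arguments pw_Kinv {R x r}.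
Arguments pw_lt {R x y r}.
Arguments exp_anti {R x p q}.
Arguments approx_pow {R r A dd F P}.

Lemma meas_lt d (T : measurableType d) (R : realType) (k : T -> R) u :
  measurable_fun setT k -> measurable [set x | u < k x].
Proof.
by move=> mk; have := mk measurableT _ (measurable_itv `]u, +oo[); rewrite setTI preimage_itvoy.
Qed.

Theorem corollary4p3 (d : measure_display) (T : measurableType d) (R : realType)
  (f g : T -> R) (star S : R -> R -> R)
  (alpha beta gamma lambda upsilon tau : R) :
  F01 f -> F01 g -> comonotone f g ->
  cont_nondecr_op star -> t_semiconorm S ->
  0 < alpha -> 0 < beta -> 0 < gamma -> 0 < lambda -> 0 < upsilon -> 0 < tau ->
  gamma * tau <= 1 -> beta * upsilon <= 1 ->
  (forall a b c, unit01 a -> unit01 b -> unit01 c ->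
     (S ((star a b) `^ alpha) c) `^ lambda <=
       Num.min (star ((S (a `^ beta) c) `^ upsilon) b)
               (star a ((S (b `^ gamma) c) `^ tau))) ->
  forall m : set T -> \bar R, monotone_measure m -> m setT = 1%E ->
    (semiconormed_integral S m (fun x => (star (f x) (g x)) `^ alpha)) `^ lambda <=
      star ((semiconormed_integral S m (fun x => f x `^ beta)) `^ upsilon)
           ((semiconormed_integral S m (fun x => g x `^ gamma)) `^ tau).
Proof.
move=> Ff Fg com hs hS a0 b0 g0 l0 u0 t0 gt1 bu1 hyp m mm m1.
have [s01 _ smon1 smon2] := hs.
have [S01 Smon1 Smon2 S0] := hS.
have [mf f01] := Ff; have [mg g01] := Fg.
set h := fun x => star (f x) (g x) `^ alpha.
set hf := fun x => f x `^ beta.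
set hg := fun x => g x `^ gamma.
have mh : forall u, measurable [set x | u < h x].
  by move=> u; apply: meas_lt; apply: measurableT_comp (@measurable_powR R _) (meas_star Ff Fg hs).
have mhf : forall u, measurable [set x | u < hf x].
  by move=> u; apply: meas_lt; apply: measurableT_comp (@measurable_powR R _) mf.
have mhg : forall u, measurable [set x | u < hg x].
  by move=> u; apply: meas_lt; apply: measurableT_comp (@measurable_powR R _) mg.
have [Ih01 Ihlb _] := I_props hS mm m1 mh.
have [If01 Iflb Ifad] := I_props hS mm m1 mhf.
have [Ig01 Iglb Igad] := I_props hS mm m1 mhg.
rewrite -/h -/hf -/hg.
set Ih := semiconormed_integral S m h.
set A := semiconormed_integral S m hf.
set B := semiconormed_integral S m hg.
set Fv := fun t => S t (fine (m [set x | t < hf x])).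
set Gv := fun t => S t (fine (m [set x | t < hg x])).
have un01 : forall t : R, 0 < t <= 1 -> unit01 t.
  by move=> t /andP[/ltW tt0 tt1]; rewrite /unit01 tt0 tt1.
have Fv01 : forall t, 0 < t <= 1 -> unit01 (Fv t).
  by move=> t ht; apply: S01 (un01 _ ht) _; case: (mfine01 mm m1 (mhf t)).
have Gv01 : forall t, 0 < t <= 1 -> unit01 (Gv t).
  by move=> t ht; apply: S01 (un01 _ ht) _; case: (mfine01 mm m1 (mhg t)).
have u000 : unit01 (0 : R) by rewrite /unit01 lexx ler01.
have Fvge : forall t, 0 < t <= 1 -> t <= Fv t.
  move=> t ht; have [c01 _] := mfine01 mm m1 (mhf t).
  have [h0 _] := S0 t (un01 _ ht); rewrite -[X in X <= _]h0.
  have /andP[c0 _] := c01; exact: Smon2 (un01 _ ht) u000 c01 c0.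
have Gvge : forall t, 0 < t <= 1 -> t <= Gv t.
  move=> t ht; have [c01 _] := mfine01 mm m1 (mhg t).
  have [h0 _] := S0 t (un01 _ ht); rewrite -[X in X <= _]h0.
  have /andP[c0 _] := c01; exact: Smon2 (un01 _ ht) u000 c01 c0.
have starpos : forall a, 0 < a <= 1 -> 0 < star a 0.
  move=> a /andP[a0' a1].
  set c := a `^ upsilon^-1.
  have c0 : 0 < c by apply: powR_gt0.
  have c01 : unit01 c by apply: pw01; rewrite ?invr_ge0 ?ltW // /unit01 ltW.
  have H := hyp 0 0 c u000 u000 c01.
  have e1 : (0:R) `^ beta = 0 by rewrite powR0 // gt_eqF.
  have e2 : S 0 c = c := (S0 c c01).2.
  have e3 : c `^ upsilon = a by rewrite /c pw_invK // ltW.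
  rewrite e1 e2 e3 in H.
  move: H; rewrite le_min => /andP[H _].
  have s00 : unit01 (star 0 0 `^ alpha) by apply: pw01; [exact: s01 | exact: ltW].
  have H0 : S 0 c <= S (star 0 0 `^ alpha) c.
    by apply: Smon1 u000 s00 c01 _; exact: powR_ge0.
  rewrite e2 in H0.
  have H1 : c `^ lambda <= S (star 0 0 `^ alpha) c `^ lambda.
    by apply: pw_mono => //; [exact: ltW | exact: ltW].
  exact: lt_le_trans (powR_gt0 _ c0) (le_trans H1 H).
have Ih0 : 0 <= Ih by case/andP: Ih01.
have key : forall t s, 0 < t <= 1 -> 0 < s <= 1 ->
    Ih `^ lambda <= star (Fv t `^ upsilon) (Gv s `^ tau).
  move=> t s ht hs'.
  have [tp t1] := andP ht; have [sp s1] := andP hs'.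
  set a := t `^ beta^-1.
  set b := s `^ gamma^-1.
  have ap : 0 < a by apply: powR_gt0.
  have bp : 0 < b by apply: powR_gt0.
  have a01 : unit01 a by apply: pw01; [exact: un01 | rewrite invr_ge0 ltW].
  have b01 : unit01 b by apply: pw01; [exact: un01 | rewrite invr_ge0 ltW].
  have ta : a `^ beta = t by rewrite pw_invK // ltW.
  have sb : b `^ gamma = s by rewrite pw_invK // ltW.
  have ea : [set x | t < hf x] = [set x | a < f x].
    rewrite predeqE => x /=; have /andP[fx0 _] := f01 x; split.
    - move=> H; rewrite ltNge; apply/negP => fa.
      have H' := pw_mono (ltW b0) fx0 fa; rewrite ta in H'; by move: H; rewrite /hf ltNge H'.
    - by move=> H; rewrite /hf -ta; apply: pw_lt => //; exact: ltW.
  have eb : [set x | s < hg x] = [set x | b < g x].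
    rewrite predeqE => x /=; have /andP[gx0 _] := g01 x; split.
    - move=> H; rewrite ltNge; apply/negP => gb.
      have H' := pw_mono (ltW g0) gx0 gb; rewrite sb in H'; by move: H; rewrite /hg ltNge H'.
    - by move=> H; rewrite /hg -sb; apply: pw_lt => //; exact: ltW.
  have mfa : measurable [set x | a < f x] by rewrite -ea.
  have mgb : measurable [set x | b < g x] by rewrite -eb.
  set u := star a b `^ alpha.
  have ab01 : unit01 (star a b) by exact: s01.
  have abp : 0 < star a b.
    apply: lt_le_trans (starpos a _) _; first by rewrite ap; case/andP: a01.
    exact: (smon2 a 0 b a01 u000 b01 (ltW bp)).
  have up : 0 < u by apply: powR_gt0.
  have u01 : unit01 u by apply: pw01 => //; exact: ltW.
  have hu : Ih <= S u (fine (m [set x | u < h x])).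
    by apply: Ihlb; rewrite up; case/andP: u01.
  have [cu01 _] := mfine01 mm m1 (mh u).
  have incl : [set x | u < h x] `<=` [set x | a < f x] `|` [set x | b < g x].
    move=> x /= hx.
    have [fa|fa] := ltP a (f x); first by left.
    have [gb|gb] := ltP b (g x); first by right.
    exfalso.
    have H : star (f x) (g x) <= star a b.
      apply: le_trans (smon1 _ _ _ (f01 x) a01 (g01 x) fa) _.
      exact: smon2 a01 (g01 x) b01 gb.
    have /andP[fg0 _] := s01 _ _ (f01 x) (g01 x).
    have H' := pw_mono (ltW a0) fg0 H; by move: hx; rewrite /h /u ltNge H'.
  have cmon : [set x | a < f x] `<=` [set x | b < g x] \/
               [set x | b < g x] `<=` [set x | a < f x].
    case: (pselect ([set x | a < f x] `<=` [set x | b < g x])) => [H|H]; [by left | right].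
    move=> y /= gy; rewrite ltNge; apply/negP => fy.
    apply: H => x /= fx; rewrite ltNge; apply/negP => gx.
    have := com x y.
    have h1 : 0 < f x - f y by rewrite subr_gt0; exact: le_lt_trans fy fx.
    have h2 : g x - g y < 0 by rewrite subr_lt0; exact: le_lt_trans gx gy.
    by rewrite leNgt pmulr_rlt0 // h2.
  have hlam : Ih `^ lambda <= S u (fine (m [set x | u < h x])) `^ lambda.
    exact: pw_mono (ltW l0) Ih0 hu.
  have eFv : Fv t = S t (fine (m [set x | a < f x])) by rewrite /Fv ea.
  have eGv : Gv s = S s (fine (m [set x | b < g x])) by rewrite /Gv eb.
  have Fvu : unit01 (Fv t `^ upsilon) by apply: pw01; [exact: Fv01 | exact: ltW].
  have Gvu : unit01 (Gv s `^ tau) by apply: pw01; [exact: Gv01 | exact: ltW].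
  have uleb : upsilon <= beta^-1.
    by rewrite -(ler_pM2l b0) mulfV ?gt_eqF.
  have tleg : tau <= gamma^-1.
    by rewrite -(ler_pM2l g0) mulfV ?gt_eqF.
  have aF : a <= Fv t `^ upsilon.
    apply: le_trans (exp_anti ht uleb) _.
    exact: pw_mono (ltW u0) (ltW tp) (Fvge t ht).
  have bG : b <= Gv s `^ tau.
    apply: le_trans (exp_anti hs' tleg) _.
    exact: pw_mono (ltW t0) (ltW sp) (Gvge s hs').
  case: cmon => H.
  - have sub : [set x | u < h x] `<=` [set x | b < g x].
      by move=> x /incl [/H|].
    have [cg01 _] := mfine01 mm m1 mgb.
    have le1 := mfine_le mm m1 (mh u) mgb sub.
    have le2 : S u (fine (m [set x | u < h x])) <= S u (fine (m [set x | b < g x])).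
      exact: Smon2 u01 cu01 cg01 le1.
    apply: le_trans hlam _.
    apply: le_trans (pw_mono (ltW l0) _ le2) _.
      by case/andP: (S01 _ _ u01 cu01).
    apply: le_trans (hyp a b _ a01 b01 cg01) _.
    rewrite ge_min; apply/orP; right.
    rewrite sb -eGv.
    exact: smon1 a01 Fvu Gvu aF.
  - have sub : [set x | u < h x] `<=` [set x | a < f x].
      by move=> x /incl [|/H].
    have [cf01 _] := mfine01 mm m1 mfa.
    have le1 := mfine_le mm m1 (mh u) mfa sub.
    have le2 : S u (fine (m [set x | u < h x])) <= S u (fine (m [set x | a < f x])).
      exact: Smon2 u01 cu01 cf01 le1.
    apply: le_trans hlam _.
    apply: le_trans (pw_mono (ltW l0) _ le2) _.
      by case/andP: (S01 _ _ u01 cu01).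
    apply: le_trans (hyp a b _ a01 b01 cf01) _.
    rewrite ge_min; apply/orP; left.
    rewrite ta -eFv.
    exact: smon2 Fvu b01 Gvu bG.
apply/ler_addgt0Pr => e e0.
have A0 : 0 <= A by case/andP: If01.
have B0 : 0 <= B by case/andP: Ig01.
have [dd dd0 hd] := star_cont _ hs _ _ (pw01 If01 (ltW u0)) (pw01 Ig01 (ltW t0)) _ e0.
have [t ht Ht] := approx_pow (P := fun t => 0 < t <= 1) (F := Fv) u0 A0 dd0 Iflb Ifad.
have [s hs' Hs] := approx_pow (P := fun t => 0 < t <= 1) (F := Gv) t0 B0 dd0 Iglb Igad.
have Fvu : unit01 (Fv t `^ upsilon) by apply: pw01; [exact: Fv01 | exact: ltW].
have Gvu : unit01 (Gv s `^ tau) by apply: pw01; [exact: Gv01 | exact: ltW].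
have H1 := hd _ _ Fvu Gvu Ht Hs.
have H2 := key t s ht hs'.
rewrite distrC in H1; have H3 := le_lt_trans (ler_norm _) H1.
apply: le_trans H2 _.
by rewrite -lerBlDl ltW.
Qed.
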